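(* Let $d\ge1$, $k\ge1$, and let $G=(V,D)$ be a $k$-fold $\mathcal{R}_d$-circuit with at most one technicolour vertex. Then $G$ is a trivial $k$-fold $\mathcal{R}_d$-circuit.
   Context: For a graph $G=(V,E)$ and a generic $p:V\to\mathbb{R}^d$ (coordinates algebraically independent over $\mathbb{Q}$), the rigidity matrix has a row for each $uv\in E$ with $p(u)-p(v)$ in the $d$ columns of $u$, $p(v)-p(u)$ in those of $v$, zeros elsewhere; $\mathcal{R}_d$ is its row matroid, with rank $r_d$. A set of edges is cyclic if it is a union of $\mathcal{R}_d$-circuits. $(V,D)$ is a $k$-fold $\mathcal{R}_d$-circuit if $D$ is cyclic and $r_d(D)=|D|-k$. Its principal partition is the partition $\{A_1,\dots,A_\ell\}$ of $D$ such that $\{D\setminus A_i\}$ is exactly the set of $(k-1)$-fold $\mathcal{R}_d$-circuits contained in $D$ (one always has $\ell\ge k$); it is trivial if $\ell=k$. A vertex is technicolour if it is incident with edges from at least two parts of the principal partition. *)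

(* Defs.v *)
From HB Require Import structures.
From mathcomp Require Import all_boot all_order all_algebra.
From mathcomp Require Import reals.
From mathcomp Require Import mpoly.
Set Implicit Arguments. Unset Strict Implicit. Unset Printing Implicit Defensive.
Import Order.TTheory GRing.Theory Num.Theory.
Local Open Scope ring_scope.

Section Rigidity.
Variables (R : realType) (T : finType) (d : nat).

Definition is_edge (e : {set T}) : bool := #|e| == 2%N.

Definition coords (p : T -> 'rV[R]_d) : 'rV[R]_(#|T| * d) :=
  mxvec (\matrix_(a < #|T|, i < d) p (enum_val a) 0 i).

Definition generic (p : T -> 'rV[R]_d) : Prop :=
  forall P : {mpoly rat[#|T| * d]}, P != 0 ->
    (map_mpoly (ratr : rat -> R) P).@[fun j => coords p 0 j] != 0.

(* Row of the rigidity matrix for edge e = uv: in the columns of u the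
   vector p(u)-p(v), in those of v the vector p(v)-p(u), zero elsewhere. *)
Definition rig_row (p : T -> 'rV[R]_d) (e : {set T}) : 'rV[R]_(#|T| * d) :=
  mxvec (\matrix_(a < #|T|, i < d)
     (if enum_val a \in e then
        \sum_(x in e :\ enum_val a) (p (enum_val a) 0 i - p x 0 i)
      else 0)).

Definition rd (p : T -> 'rV[R]_d) (F : {set {set T}}) : nat :=
  \rank (\sum_(e in F) <<rig_row p e>>)%MS.

Definition indep p (F : {set {set T}}) : bool := rd p F == #|F|.

Definition circuit p (C : {set {set T}}) : bool :=
  ~~ indep p C && [forall e in C, indep p (C :\ e)].

Definition cyclic p (F : {set {set T}}) : bool :=
  [forall e in F, exists C : {set {set T}},
     [&& circuit p C, e \in C & C \subset F]].

Definition kfold_circuit p (k : nat) (D : {set {set T}}) : bool :=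
  cyclic p D && ((rd p D + k)%N == #|D|).

Definition principal_partition p (k : nat) (D : {set {set T}})
    : {set {set {set T}}} :=
  [set D :\: X | X in [set X : {set {set T}} |
                       (X \subset D) && kfold_circuit p k.-1 X]].

Definition trivial_kfold p (k : nat) (D : {set {set T}}) : Prop :=
  #|principal_partition p k D| = k.

Definition technicolour p (k : nat) (D : {set {set T}}) (v : T) : bool :=
  [exists A in principal_partition p k D, exists B in principal_partition p k D,
     [&& A != B, [exists e in A, v \in e] & [exists e in B, v \in e]]].

End Rigidity.

(* Main.v *)
Require Import Defs.
From HB Require Import structures.
From mathcomp Require Import all_boot all_order all_algebra.
From mathcomp Require Import reals.
From mathcomp Require Import mpoly.
From mathcomp Require Import zify.
Set Implicit Arguments. Unset Strict Implicit. Unset Printing Implicit Defensive.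
Import Order.TTheory GRing.Theory Num.Theory.

Section LA.
Local Open Scope ring_scope.
Variables (R : realType) (T : finType) (d : nat) (p : T -> 'rV[R]_d).

Local Notation n := (#|T| * d)%N.
Definition SP (F : {set {set T}}) : 'M[R]_n := (\sum_(e in F) <<rig_row p e>>)%MS.

Lemma rdE (F : {set {set T}}) : rd p F = \rank (SP F). Proof. by []. Qed.

Lemma SP_mono (A B : {set {set T}}) : A \subset B -> (SP A <= SP B)%MS.
Proof.
move=> AB; apply/sumsmx_subP => e eA.
by apply: (sumsmx_sup e) => //; apply: (subsetP AB).
Qed.

Lemma SP_union (A B : {set {set T}}) : (SP (A :|: B) == SP A + SP B)%MS.
Proof.
apply/andP; split.
  apply/sumsmx_subP => e; rewrite inE => /orP[eA|eB].
    apply: submx_trans (addsmxSl _ _); exact: (sumsmx_sup e).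
  apply: submx_trans (addsmxSr _ _); exact: (sumsmx_sup e).
by rewrite addsmx_sub !SP_mono // ?subsetUl ?subsetUr.
Qed.

Lemma rd_le_card (F : {set {set T}}) : (rd p F <= #|F|)%N.
Proof.
rewrite rdE /SP.
rewrite -sum1_card.
apply: (big_rec2 (fun (M : 'M[R]_n) (k : nat) => \rank M <= k)%N).
  by rewrite mxrank0.
move=> e k M _ HM.
apply: leq_trans (mxrank_adds_leqif _ _) _.
apply: leq_add => //.
by rewrite genmxE rank_leq_row.
Qed.

Lemma rd_mono (A B : {set {set T}}) : A \subset B -> (rd p A <= rd p B)%N.
Proof. by move=> AB; rewrite !rdE; apply: mxrankS; apply: SP_mono. Qed.

Lemma rd_submod (A B : {set {set T}}) : (rd p (A :|: B) + rd p (A :&: B) <= rd p A + rd p B)%N.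
Proof.
rewrite !rdE (eqmx_rank (SP_union A B)) -(mxrank_sum_cap (SP A)) leq_add2l.
apply: mxrankS; rewrite sub_capmx; apply/andP; split; apply: SP_mono; [exact: subsetIl | exact: subsetIr].
Qed.


Definition incident (A : {set {set T}}) (x : T) : bool := [exists e in A, x \in e].

Definition good (A : {set {set T}}) (W : 'M[R]_(#|T|, d)) : Prop :=
  (forall a i, ~~ incident A (enum_val a) -> W a i = 0) /\
  (forall i, \sum_a W a i = 0).

Lemma good0 A : good A 0.
Proof. by split=> [a i _|i]; [rewrite mxE | apply: big1 => a _; rewrite mxE]. Qed.

Lemma goodD A W1 W2 : good A W1 -> good A W2 -> good A (W1 + W2).
Proof.
move=> [z1 s1] [z2 s2]; split=> [a i H|i]; first by rewrite mxE z1 ?z2 ?addr0.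
under eq_bigr => a _ do rewrite mxE.
by rewrite big_split /= s1 s2 addr0.
Qed.

Lemma goodZ A c W : good A W -> good A (c *: W).
Proof.
move=> [z s]; split=> [a i H|i]; first by rewrite mxE z ?mulr0.
under eq_bigr => a _ do rewrite mxE.
by rewrite -mulr_sumr s mulr0.
Qed.

Lemma good_row (A : {set {set T}}) e : e \in A -> good A (vec_mx (rig_row p e)).
Proof.
move=> eA; rewrite /rig_row mxvecK; split=> [a i H|i].
  rewrite mxE; case: ifP => // ae; case/negP: H.
  by apply/existsP; exists e; rewrite eA ae.
under eq_bigr => a _ do rewrite mxE.
rewrite -(big_enum_val (fun x => if x \in e then
    \sum_(y in e :\ x) (p x 0 i - p y 0 i) else 0)) /=.
rewrite -big_mkcond /=.
have -> : \sum_(x in e) \sum_(y in e :\ x) (p x 0 i - p y 0 i) =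
          \sum_(x in e) \sum_(y in e) (p x 0 i - p y 0 i).
  apply: eq_bigr => x xe.
  by rewrite [RHS](big_setD1 x xe) /= subrr add0r.
under eq_bigr => x _ do rewrite sumrB.
rewrite sumrB; rewrite [X in _ - X](exchange_big) /=.
by rewrite subrr.
Qed.

Lemma sub_good (A : {set {set T}}) (w : 'rV[R]_n) :
  (w <= SP A)%MS -> good A (vec_mx w).
Proof.
case/sub_sumsmxP => u ->; rewrite raddf_sum.
apply: (big_ind (good A)); [exact: good0 | exact: goodD |].
move=> e eA.
have: (u e *m <<rig_row p e>> <= rig_row p e)%MS.
  by rewrite -(genmxE (rig_row p e)) submxMl.
case/sub_rVP => c ->.
change (good A (vec_mx (c *: rig_row p e))).
have -> : vec_mx (c *: rig_row p e) = c *: vec_mx (rig_row p e).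
  by apply/matrixP => ? ?; rewrite !mxE.
by apply: goodZ; apply: good_row.
Qed.

Lemma rd_glue (A B : {set {set T}}) :
  (forall x y, incident A x -> incident B x -> incident A y -> incident B y -> x = y) ->
  rd p (A :|: B) = (rd p A + rd p B)%N.
Proof.
move=> uniq1.
rewrite !rdE (eqmx_rank (SP_union A B)) -(mxrank_sum_cap (SP A)).
suff -> : (SP A :&: SP B)%MS = 0 by rewrite mxrank0 addn0.
apply/eqP; rewrite -submx0; apply/row_subP => r; rewrite submx0.
set w := row r _.
have wA : (w <= SP A)%MS by apply: submx_trans (row_sub _ _) (capmxSl _ _).
have wB : (w <= SP B)%MS by apply: submx_trans (row_sub _ _) (capmxSr _ _).
have [zA sA] := sub_good wA; have [zB sB] := sub_good wB.
rewrite -vec_mx_eq0; apply/eqP/matrixP => a i; rewrite [RHS]mxE.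
case: (boolP (incident A (enum_val a))) => Ha; last by rewrite zA.
case: (boolP (incident B (enum_val a))) => Hb; last by rewrite zB.
have := sA i; rewrite (bigD1 a) //= big1 ?addr0 // => a' Ha'.
case: (boolP (incident A (enum_val a'))) => Ha2; last by rewrite zA.
case: (boolP (incident B (enum_val a'))) => Hb2; last by rewrite zB.
by case/negP: Ha'; apply/eqP/enum_val_inj; apply: uniq1.
Qed.

End LA.

Section Mat.
Variables (R : realType) (T : finType) (d : nat) (p : T -> 'rV[R]_d).
Local Notation r := (rd p).
Implicit Types A B C S X Y F U : {set {set T}}.

Lemma r_le A : r A <= #|A|. Proof. exact: rd_le_card. Qed.
Lemma r_mono A B : A \subset B -> r A <= r B. Proof. exact: rd_mono. Qed.
Lemma r_sub A B : r (A :|: B) + r (A :&: B) <= r A + r B. Proof. exact: rd_submod. Qed.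

Lemma r_D1 A f : r A <= r (A :\ f) + 1.
Proof.
have sub : A \subset (A :\ f) :|: [set f].
  by apply/subsetP => x xA; rewrite !inE xA; case: (x == f).
apply: leq_trans (r_mono sub) _.
have := r_sub (A :\ f) [set f]; have := r_le [set f]; rewrite cards1; lia.
Qed.

Lemma nmono X Y : X \subset Y -> #|X| + r Y <= #|Y| + r X.
Proof.
move=> XY.
have := r_sub X (Y :\: X).
have -> : X :|: (Y :\: X) = Y.
  apply/setP => x; rewrite !inE; case: (boolP (x \in X)) => // xX.
  by rewrite (subsetP XY).
have := r_le (Y :\: X); have := cardsID X Y.
have -> : Y :&: X = X by apply/setIidPr.
lia.
Qed.

Lemma indep_sub X Y : X \subset Y -> r Y = #|Y| -> r X = #|X|.
Proof.
move=> XY rY; have := nmono XY; have := r_le X; lia.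
Qed.

Lemma coloop_inh S U g : U \subset S -> g \in U -> r (S :\ g) < r S -> r (U :\ g) < r U.
Proof.
move=> US gU lt; have := r_sub (S :\ g) U.
have -> : (S :\ g) :|: U = S.
  apply/setP => x; rewrite !inE; case: (x =P g) => [->|_] /=.
    by rewrite gU (subsetP US _ gU).
  by case xU: (x \in U); rewrite ?orbT ?orbF // (subsetP US _ xU).
have -> : (S :\ g) :&: U = U :\ g.
  by apply/setP => x; rewrite !inE; case xU: (x \in U); rewrite ?andbT ?andbF // (subsetP US _ xU) andbT.
lia.
Qed.

Lemma coloops_indep S : (forall f, f \in S -> r (S :\ f) < r S) -> r S = #|S|.
Proof.
have [n Hn] : exists n, #|S| = n by exists #|S|.
elim: n S Hn => [|n IH] S Hn H.
  by have := r_le S; rewrite Hn; lia.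
have /card_gt0P [f fS] : 0 < #|S| by rewrite Hn.
have Hn' : #|S :\ f| = n by move: (cardsD1 f S); rewrite fS Hn; lia.
have IH' := IH (S :\ f) Hn'.
have: r (S :\ f) = #|S :\ f|.
  apply: IH' => g; rewrite inE => /andP[gf gS].
  have := coloop_inh (subsetDl S [set f]) _ (H g gS).
  by rewrite inE gf gS; apply.
have := H f fS; have := r_le S; lia.
Qed.

Lemma circuit_D1 C S e : circuit p C -> e \in C -> C \subset S -> r (S :\ e) = r S.
Proof.
case/andP => dep /forall_inP ind eC CS.
have iCe := eqP (ind e eC).
have cC := cardsD1 e C; rewrite eC in cC.
have rC : r C <= #|C :\ e|.
  have := r_le C; move: dep; rewrite /indep; move=> /eqP; lia.
have := r_sub (S :\ e) C.
have -> : (S :\ e) :|: C = S.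
  apply/setP => x; rewrite !inE; case: (x =P e) => [->|_] /=.
    by rewrite eC (subsetP CS _ eC).
  by case xC: (x \in C); rewrite ?orbT ?orbF // (subsetP CS _ xC).
have -> : (S :\ e) :&: C = C :\ e.
  by apply/setP => x; rewrite !inE; case xC: (x \in C); rewrite ?andbT ?andbF // (subsetP CS _ xC) andbT.
have := r_mono (subsetDl S [set e]).
rewrite iCe; lia.
Qed.

Lemma dep_circuit S e : e \in S -> r (S :\ e) = r S ->
  exists C, [&& circuit p C, e \in C & C \subset S].
Proof.
move=> eS req.
pose P n := [exists C' : {set {set T}}, [&& C' \subset S :\ e, r (e |: C') == r C' & #|C'| == n]].
have exP : exists n, P n.
  exists #|S :\ e|; apply/existsP; exists (S :\ e); rewrite subxx eqxx setD1K // req eqxx //.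
case: (ex_minnP exP) => m /existsP [C' /and3P [C'S /eqP rC' /eqP cC']] minm.
have eC' : e \notin C' by apply/negP => /(subsetP C'S); rewrite !inE eqxx.
have key : forall f, f \in C' -> r (C' :\ f) < r (e |: (C' :\ f)).
  move=> f fC'; rewrite ltn_neqAle r_mono ?subsetUr // andbT.
  apply/negP => /eqP H.
  have : m <= #|C' :\ f|.
    apply: minm; apply/existsP; exists (C' :\ f); rewrite H eqxx eqxx andbT /=.
    rewrite andbT; by apply: subset_trans (subsetDl _ _) C'S.
  by move: (cardsD1 f C'); rewrite fC' cC'; lia.
have iC' : r C' = #|C'|.
  apply: coloops_indep => f fC'.
  have := key f fC'.
  have : r (e |: (C' :\ f)) <= r (e |: C').
    by apply: r_mono; apply: setUS; apply: subsetDl.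
  have := r_mono (subsetDl C' [set f]); rewrite rC'.
  case: (ltngtP (r (C' :\ f)) (r C')); lia.
exists (e |: C'); rewrite setU11 /=.
apply/andP; split; last by apply/subsetP => x; rewrite !inE => /orP[/eqP->//|/(subsetP C'S)]; rewrite inE => /andP[].
apply/andP; split.
  rewrite /indep rC' cardsU1 eC' iC'; lia.
apply/forall_inP => f; rewrite !inE => /orP[/eqP->|fC'].
  have -> : (e |: C') :\ e = C'.
    apply/setP => x; rewrite !inE; case: (x =P e) => [->|] /=; first by rewrite (negbTE eC').
    by [].
  by rewrite /indep iC'.
have fe : f != e by apply/negP => /eqP fe; move: eC'; rewrite -fe fC'.
have -> : (e |: C') :\ f = e |: (C' :\ f).
  apply/setP => x; rewrite !inE; case: (x =P e) => [->|] /=; first by rewrite eq_sym fe.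
  by [].
have iCf := indep_sub (subsetDl C' [set f]) iC'.
have := key f fC'; have := r_le (e |: (C' :\ f)).
rewrite /indep cardsU1 !inE (negbTE eC') andbF /=.
have := cardsD1 f C'; rewrite fC' => _ H1 H2; rewrite eqn_leq H1 /= add1n -iCf; exact: H2.
Qed.

Lemma nstrict X Y : cyclic p Y -> X \subset Y -> X != Y -> #|X| + r Y < #|Y| + r X.
Proof.
move=> cY XY XneY.
have [e eY eX] : exists2 e, e \in Y & e \notin X.
  have : X \proper Y by rewrite properEneq XneY XY.
  by case/properP => _ [e eY eX]; exists e.
have [C /and3P [cC eC CY]] : exists C, [&& circuit p C, e \in C & C \subset Y].
  by move/forall_inP: cY => /(_ e eY) /existsP [C H]; exists C.
have req := circuit_D1 cC eC CY.
have XYe : X \subset Y :\ e.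
  by apply/subsetP => x xX; rewrite !inE (subsetP XY _ xX) andbT; apply/eqP => xe; move: eX; rewrite -xe xX.
have := nmono XYe; rewrite req; have := cardsD1 e Y; rewrite eY; lia.
Qed.

Lemma cyclicU X Y : cyclic p X -> cyclic p Y -> cyclic p (X :|: Y).
Proof.
move=> /forall_inP cX /forall_inP cY; apply/forall_inP => e; rewrite inE => /orP[eX|eY].
  case/existsP: (cX e eX) => C /and3P[c1 c2 c3]; apply/existsP; exists C.
  by rewrite c1 c2 (subset_trans c3 (subsetUl _ _)).
case/existsP: (cY e eY) => C /and3P[c1 c2 c3]; apply/existsP; exists C.
by rewrite c1 c2 (subset_trans c3 (subsetUr _ _)).
Qed.

Definition cyc S := [set x in S | [exists C, [&& circuit p C, x \in C & C \subset S]]].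

Lemma cyc_sub S : cyc S \subset S.
Proof. by apply/subsetP => x; rewrite inE => /andP[]. Qed.

Lemma cyc_cyclic S : cyclic p (cyc S).
Proof.
apply/forall_inP => x; rewrite inE => /andP[xS /existsP[C /and3P[c1 c2 c3]]].
apply/existsP; exists C; rewrite c1 c2 /=.
apply/subsetP => y yC; rewrite inE (subsetP c3 _ yC) /=.
by apply/existsP; exists C; rewrite c1 yC c3.
Qed.

Lemma cyc_rank_aux S n F : #|F| = n -> F \subset S :\: cyc S -> r S = r (S :\: F) + #|F|.
Proof.
elim: n F => [|n IH] F Fn FS.
  have -> : F = set0 by apply/eqP; rewrite -cards_eq0 Fn.
  by rewrite setD0 cards0 addn0.
have /card_gt0P [f fF] : 0 < #|F| by rewrite Fn.
have Fn' : #|F :\ f| = n by move: (cardsD1 f F); rewrite fF Fn; lia.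
have FS' : F :\ f \subset S :\: cyc S by apply: subset_trans (subsetDl _ _) FS.
have IH' := IH _ Fn' FS'.
have fS : f \in S :\: (F :\ f).
  by rewrite !inE eqxx /=; move: (subsetP FS _ fF); rewrite inE => /andP[].
have eqs : (S :\: (F :\ f)) :\ f = S :\: F.
  apply/setP => x; rewrite !inE; case: (x =P f) => [->|] /=; first by rewrite fF.
  by [].
have lt : r ((S :\: (F :\ f)) :\ f) < r (S :\: (F :\ f)).
  rewrite ltn_neqAle r_mono ?subsetDl // andbT; apply/negP => /eqP H.
  have [C /and3P[c1 c2 c3]] := dep_circuit fS H.
  have fS0 : f \in S by move: fS; rewrite inE => /andP[].
  move: (subsetP FS _ fF); rewrite inE => /andP[/negP fnc _]; apply: fnc.
  rewrite inE fS0 /=; apply/existsP; exists C; rewrite c1 c2 /=.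
  by apply: subset_trans c3 (subsetDl _ _).
have := r_D1 (S :\: (F :\ f)) f.
rewrite eqs in lt *; rewrite IH' Fn Fn'; lia.
Qed.

Lemma cyc_rank S : #|cyc S| + r S = #|S| + r (cyc S).
Proof.
have H := cyc_rank_aux (erefl _) (subxx (S :\: cyc S)).
have E : S :\: (S :\: cyc S) = cyc S.
  apply/setP => x; rewrite !in_setD; case xc: (x \in cyc S); last by case: (x \in S).
  by rewrite (subsetP (cyc_sub S) _ xc).
rewrite E in H.
have := cardsID (cyc S) S.
have -> : S :&: cyc S = cyc S by apply/setIidPr; apply: cyc_sub.
rewrite {}H; lia.
Qed.
End Mat.

Section Main.
Variables (R : realType) (T : finType) (d k : nat) (p : T -> 'rV[R]_d) (D : {set {set T}}).
Local Notation r := (rd p).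
Hypothesis k1 : 1 <= k.
Hypothesis kD : kfold_circuit p k D.
Hypothesis tech : #|[set v : T | technicolour p k D v]| <= 1.

Let Xs := [set X : {set {set T}} | (X \subset D) && kfold_circuit p k.-1 X].
Let P := principal_partition p k D.

Lemma memP A : A \in P -> exists2 X, X \in Xs & A = D :\: X.
Proof. by case/imsetP => X; rewrite inE => H ->; exists X => //; rewrite inE. Qed.

Lemma cD : cyclic p D. Proof. by case/andP: kD. Qed.
Lemma rD : r D + k = #|D|. Proof. by case/andP: kD => _ /eqP. Qed.

Lemma XsP X : X \in Xs -> [/\ X \subset D, cyclic p X & r X + k.-1 = #|X|].
Proof. by rewrite inE => /andP[XD /andP[cX /eqP ->]]. Qed.

Lemma F1 X Y : X \in Xs -> Y \in Xs -> X != Y -> X :|: Y = D.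
Proof.
move=> /XsP[XD cX rX] /XsP[YD cY rY] XY.
have cU := cyclicU cX cY.
have UD : X :|: Y \subset D by rewrite subUset XD YD.
apply/eqP; apply/negPn/negP => UneD.
have h1 := nstrict cD UD UneD.
have XneU : X != X :|: Y.
  apply/negP => /eqP XU.
  have YX : Y \subset X by rewrite XU subsetUr.
  have YneX : Y != X by rewrite eq_sym.
  have := nstrict cX YX YneX; lia.
have h2 := nstrict cU (subsetUl X Y) XneU.
have := rD; lia.
Qed.

Lemma F4 A : A \in P -> A \subset D.
Proof. by case/memP => X _ ->; apply: subsetDl. Qed.

Lemma F5 A : A \in P -> D :\: A \in Xs.
Proof.
case/memP => X Xin ->; have [XD _ _] := XsP Xin.
have -> : D :\: (D :\: X) = X.
  apply/setP => x; rewrite !in_setD; case xX: (x \in X); last by case: (x \in D).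
  by rewrite (subsetP XD _ xX).
exact: Xin.
Qed.

Lemma F2 A B : A \in P -> B \in P -> A != B -> A :&: B = set0.
Proof.
move=> /memP[X Xin ->] /memP[Y Yin ->] AB.
have XY : X != Y by apply: contraNneq AB => ->.
have U := F1 Xin Yin XY.
apply/setP => x; rewrite !inE; apply/negbTE/negP => /andP[/andP[xX xD] /andP[xY _]].
by move: xD; rewrite -U inE (negbTE xX) (negbTE xY).
Qed.

Lemma F3 e : e \in D -> exists2 A, A \in P & e \in A.
Proof.
move=> eD.
set X := cyc p (D :\ e).
have XD : X \subset D :\ e by apply: cyc_sub.
have Xin : X \in Xs.
  rewrite inE (subset_trans XD (subsetDl _ _)) /= /kfold_circuit cyc_cyclic /=.
  have h := cyc_rank p (D :\ e).
  have [C /and3P[c1 c2 c3]] : exists C, [&& circuit p C, e \in C & C \subset D].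
    by move/forall_inP: cD => /(_ e eD) /existsP [C H]; exists C.
  have := circuit_D1 c1 c2 c3; have := cardsD1 e D; rewrite eD /=; have := rD.
  move=> H1 H2 H3; apply/eqP; rewrite -/X in h; have kk := prednK k1; move: H1 H2 H3 h kk; set a1 := #|D|; set a2 := #|D :\ e|; set a3 := #|X|; set a4 := r X; set a5 := r D; set a6 := r (D :\ e). lia.
exists (D :\: X); first by apply/imsetP; exists X.
by rewrite inE eD andbT; apply/negP => /(subsetP XD); rewrite !inE eqxx.
Qed.

Lemma F6 x y : technicolour p k D x -> technicolour p k D y -> x = y.
Proof.
move=> tx ty; move/card_le1_eqP: tech => H.
by apply: H; rewrite inE.
Qed.

Definition cov (Q : {set {set {set T}}}) := \bigcup_(B in Q) B.

Lemma covsum n (Q : {set {set {set T}}}) : #|Q| = n -> Q \subset P ->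
  r (cov Q) = \sum_(B in Q) r B /\ #|cov Q| = \sum_(B in Q) #|B|.
Proof.
elim: n Q => [|n IH] Q Qn QP.
  have -> : Q = set0 by apply/eqP; rewrite -cards_eq0 Qn.
  rewrite /cov !big_set0 cards0; split => //.
  by have := rd_le_card p set0; rewrite cards0; case: (r set0).
have /card_gt0P [A AQ] : 0 < #|Q| by rewrite Qn.
have Qn' : #|Q :\ A| = n by move: (cardsD1 A Q); rewrite AQ Qn; lia.
have QP' : Q :\ A \subset P by apply: subset_trans (subsetDl _ _) QP.
have [IH1 IH2] := IH _ Qn' QP'.
have AP : A \in P := subsetP QP _ AQ.
have covE : cov Q = A :|: cov (Q :\ A) by rewrite /cov (big_setD1 A AQ).
have disj : A :&: cov (Q :\ A) = set0.
  apply/setP => x; rewrite !inE; apply/negP => /andP[xA /bigcupP[B BQ xB]].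
  have BP : B \in P := subsetP QP' _ BQ.
  have AB : A != B by move: BQ; rewrite !inE eq_sym => /andP[].
  by move: (F2 AP BP AB) => /setP /(_ x); rewrite !inE xA xB.
rewrite covE !(big_setD1 A AQ) /= -IH1 -IH2; split.
  apply: rd_glue => x y.
  suff tec : forall z, incident A z -> incident (cov (Q :\ A)) z -> technicolour p k D z.
    by move=> ? ? ? ?; apply: F6; apply: tec.
  move=> z /existsP[e /andP[eA ze]] /existsP[f /andP[/bigcupP[B BQ fB] zf]].
  have BP : B \in P := subsetP QP' _ BQ.
  have AB : A != B by move: BQ; rewrite !inE eq_sym => /andP[].
  apply/existsP; exists A; rewrite AP /=; apply/existsP; exists B; rewrite BP AB /=.
  by apply/andP; split; apply/existsP; [exists e; rewrite eA | exists f; rewrite fB].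
by rewrite cardsU disj cards0 subn0.
Qed.

Lemma covP : cov P = D.
Proof.
apply/setP => e; apply/bigcupP/idP => [[A AP eA]|eD].
  exact: (subsetP (F4 AP)).
by have [A AP eA] := F3 eD; exists A.
Qed.

Lemma covPA A : A \in P -> cov (P :\ A) = D :\: A.
Proof.
move=> AP; apply/setP => e; rewrite inE; apply/bigcupP/idP => [[B BP eB]|/andP[eA eD]].
  move: BP; rewrite in_setD1 => /andP[BA BP].
  rewrite (subsetP (F4 BP) _ eB) andbT; apply/negP => eA.
  by move: (F2 BP AP BA) => /setP /(_ e); rewrite !inE eA eB.
have [B BP eB] := F3 eD; exists B => //; rewrite in_setD1 BP andbT.
by apply/negP => /eqP BA; move: eA; rewrite -BA eB.
Qed.

Lemma main_count : #|P| = k.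
Proof.
have [r1 c1] := covsum (erefl _) (subxx P).
rewrite covP in r1 c1.
have each : forall A, A \in P -> #|A| = (r A + 1)%N.
  move=> A AP.
  have [r2 c2] := covsum (erefl _) (subset_trans (subsetDl P [set A]) (subxx P)).
  rewrite covPA // in r2 c2.
  have [_ _ rX] := XsP (F5 AP).
  rewrite (big_setD1 A AP) /= in r1; rewrite (big_setD1 A AP) /= in c1.
  have h := rD; have kk := prednK k1; move: r1 c1 r2 c2 rX h kk.
  set s1 := \sum_(B in P :\ A) r B; set s2 := \sum_(B in P :\ A) #|B|.
  set a1 := #|D|; set a2 := #|D :\: A|; set a3 := r (D :\: A); set a4 := r D.
  set a5 := #|A|; set a6 := r A. lia.
have : #|D| = (\sum_(B in P) r B + #|P|)%N.
  rewrite c1 -sum1_card -big_split /=; apply: eq_bigr => B BP; exact: each.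
have h := rD; move: h; set a1 := #|D|; set a2 := r D; set a3 := \sum_(B in P) r B. lia.
Qed.
End Main.

Local Open Scope ring_scope.

Theorem proposition3p10 (R : realType) (T : finType) (d k : nat)
    (p : T -> 'rV[R]_d) (D : {set {set T}}) :
  (1 <= d)%N -> (1 <= k)%N ->
  generic p ->
  (forall e, e \in D -> is_edge e) ->
  kfold_circuit p k D ->
  (#|[set v : T | technicolour p k D v]| <= 1)%N ->
  trivial_kfold p k D.
Proof.
move=> _ k1 _ _ kD tech.
exact: (main_count k1 kD tech).
Qed.
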